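(* If $\mathcal R$ is a TRS that is complete modulo $\mathcal B$, then $\ddot{\mathcal R}$ is a TRS which is normalization equivalent modulo $\mathcal B$ to $\mathcal R$, conversion equivalent modulo $\mathcal B$ to $\mathcal R$, and canonical modulo $\mathcal B$.
   Context: Terms over a signature $\mathcal F$; $s\to_{\mathcal R}t$ is the usual rewrite relation (closure under contexts and substitutions), $\leftarrow$ its inverse. $\mathcal B$ is a fixed ES with $\mathrm{Var}(\ell)=\mathrm{Var}(r)$ for all $\ell\approx r\in\mathcal B$, $\sim_{\mathcal B}=\leftrightarrow^*_{\mathcal B}$, $\to_{\mathcal R/\mathcal B}=\sim_{\mathcal B}\cdot\to_{\mathcal R}\cdot\sim_{\mathcal B}$. $\mathcal R$ is terminating modulo $\mathcal B$ if $\to_{\mathcal R/\mathcal B}$ has no infinite sequence; Church–Rosser modulo $\mathcal B$ if $\leftrightarrow^*_{\mathcal R\cup\mathcal B}\subseteq\to^*_{\mathcal R}\cdot\sim_{\mathcal B}\cdot\leftarrow^*_{\mathcal R}$; complete modulo $\mathcal B$ if both. TRSs $\mathcal R,\mathcal S$ are normalization equivalent modulo $\mathcal B$ if $\to^!_{\mathcal R}\cdot\sim_{\mathcal B}=\to^!_{\mathcal S}\cdot\sim_{\mathcal B}$ ($a\to^!b$: $a\to^*b$ with $b$ a normal form), and conversion equivalent modulo $\mathcal B$ if $\leftrightarrow^*_{\mathcal R\cup\mathcal B}=\leftrightarrow^*_{\mathcal S\cup\mathcal B}$. Two rules $\ell\to r,\ell'\to r'$ are right-$\mathcal B$-equivalent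 variants if there is a renaming $\sigma$ with $\ell\sigma=\ell'$ and $r\sigma\sim_{\mathcal B}r'$; for a TRS $\mathcal T$, $\mathcal T_{\simeq}$ denotes a subset of $\mathcal T$ containing exactly one representative of each class of rules of $\mathcal T$ that are right-$\mathcal B$-equivalent variants of each other. A TRS is left-reduced if for every rule $\ell\to r$, $\ell$ is a normal form of the TRS without that rule; right-$\mathcal B$-reduced if for every rule $\ell\to r$, $r$ is a normal form of $\to_{\mathcal R/\mathcal B}$; canonical modulo $\mathcal B$ if complete modulo $\mathcal B$, left-reduced and right-$\mathcal B$-reduced. For $\mathcal R$ terminating modulo $\mathcal B$: $\dot{\mathcal R}=\{\ell\to r{\downarrow_{\mathcal R/\mathcal B}}\mid\ell\to r\in\mathcal R\}_{\simeq}$, where $r{\downarrow_{\mathcal R/\mathcal B}}$ is an arbitrary normal form of $r$ w.r.t. $\to_{\mathcal R/\mathcal B}$, and $\ddot{\mathcal R}=\{\ell\to r\in\dot{\mathcal R}\mid \ell\text{ is a normal form of }\dot{\mathcal R}\setminus\{\ell\to r\}\}$. *)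

(* Defs.v *)
From Stdlib Require Import List Relations.
Import ListNotations.
Set Implicit Arguments.

Section TRS.
Variables (F V : Type).

Inductive term : Type :=
| Var : V -> term
| Fun : F -> list term -> term.

Definition rule : Type := (term * term)%type.
Definition rules : Type := rule -> Prop.

Fixpoint subst (s : V -> term) (t : term) : term :=
  match t with
  | Var x => s x
  | Fun f ts => Fun f (map (subst s) ts)
  end.

Fixpoint vars (t : term) : list V :=
  match t with
  | Var x => [x]
  | Fun f ts => concat (map vars ts)
  end.

Inductive rstep (R : rules) : term -> term -> Prop :=
| rstep_root : forall l r (s : V -> term),
    R (l, r) -> rstep R (subst s l) (subst s r)
| rstep_ctx : forall f ts1 ts2 u v,
    rstep R u v -> rstep R (Fun f (ts1 ++ u :: ts2)) (Fun f (ts1 ++ v :: ts2)).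

Definition beq (B : rules) : relation term := clos_refl_sym_trans term (rstep B).

Definition relmod (R B : rules) (s t : term) : Prop :=
  exists s' t', beq B s s' /\ rstep R s' t' /\ beq B t' t.

Definition nf_of (rel : relation term) (t : term) : Prop := ~ exists u, rel t u.

Definition normalizes (R : rules) (s t : term) : Prop :=
  clos_refl_trans term (rstep R) s t /\ nf_of (rstep R) t.

Definition terminating_mod (R B : rules) : Prop :=
  ~ exists f : nat -> term, forall n, relmod R B (f n) (f (S n)).

Definition conv_RB (R B : rules) : relation term :=
  clos_refl_sym_trans term (union term (rstep R) (rstep B)).

Definition church_rosser_mod (R B : rules) : Prop :=
  forall s t, conv_RB R B s t ->
    exists u v, clos_refl_trans term (rstep R) s u /\ beq B u v /\
                clos_refl_trans term (rstep R) t v.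

Definition complete_mod (R B : rules) : Prop :=
  terminating_mod R B /\ church_rosser_mod R B.

Definition normalization_equivalent_mod (R S B : rules) : Prop :=
  forall s t, (exists u, normalizes R s u /\ beq B u t) <->
              (exists u, normalizes S s u /\ beq B u t).

Definition conversion_equivalent_mod (R S B : rules) : Prop :=
  forall s t, conv_RB R B s t <-> conv_RB S B s t.

Definition is_TRS (R : rules) : Prop :=
  forall l r, R (l, r) -> (forall x, l <> Var x) /\ incl (vars r) (vars l).

Definition remove_rule (R : rules) (rho : rule) : rules :=
  fun rho' => R rho' /\ rho' <> rho.

Definition left_reduced (R : rules) : Prop :=
  forall l r, R (l, r) -> nf_of (rstep (remove_rule R (l, r))) l.

Definition right_B_reduced (R B : rules) : Prop :=
  forall l r, R (l, r) -> nf_of (relmod R B) r.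

Definition canonical_mod (R B : rules) : Prop :=
  complete_mod R B /\ left_reduced R /\ right_B_reduced R B.

Definition renaming (sg : V -> V) : Prop :=
  exists tau : V -> V, (forall x, tau (sg x) = x) /\ (forall x, sg (tau x) = x).

Definition right_B_variants (B : rules) (rho rho' : rule) : Prop :=
  exists sg, renaming sg /\
    subst (fun x => Var (sg x)) (fst rho) = fst rho' /\
    beq B (subst (fun x => Var (sg x)) (snd rho)) (snd rho').

(* Rdot is a legitimate choice of  {l -> r↓_{R/B} | l -> r in R}_≃ :
   nf chooses, for every rule, a normal form of its rhs w.r.t. ->_{R/B},
   and Rdot contains exactly one representative of each class of
   right-B-equivalent variants among the resulting rules. *)
Definition is_Rdot (R B Rdot : rules) : Prop :=
  exists nf : rule -> term,
    (forall l r, R (l, r) ->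
        clos_refl_trans term (relmod R B) r (nf (l, r)) /\
        nf_of (relmod R B) (nf (l, r))) /\
    let T : rules := fun rho => exists l r, R (l, r) /\ rho = (l, nf (l, r)) in
    (forall rho, Rdot rho -> T rho) /\
    (forall rho, T rho -> exists rho', Rdot rho' /\ right_B_variants B rho rho') /\
    (forall rho rho', Rdot rho -> Rdot rho' -> right_B_variants B rho rho' -> rho = rho').

Definition Rddot (Rdot : rules) : rules :=
  fun rho => Rdot rho /\ nf_of (rstep (remove_rule Rdot rho)) (fst rho).

End TRS.

(* Main.v *)
Require Import Defs.
From Stdlib Require Import List Relations Lia Arith Classical ClassicalEpsilon Wellfounded.
Import ListNotations.
Set Implicit Arguments.

Section Gen.
Variable A : Type.

Lemma crt_map (r r2 : relation A) (g : A -> A) :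
  (forall a b, r a b -> r2 (g a) (g b)) ->
  forall a b, clos_refl_trans A r a b -> clos_refl_trans A r2 (g a) (g b).
Proof. intros H a b Hab; induction Hab; eauto using clos_refl_trans. Qed.

Lemma crst_map (r r2 : relation A) (g : A -> A) :
  (forall a b, r a b -> r2 (g a) (g b)) ->
  forall a b, clos_refl_sym_trans A r a b -> clos_refl_sym_trans A r2 (g a) (g b).
Proof. intros H a b Hab; induction Hab; eauto using clos_refl_sym_trans. Qed.

Lemma ct_map (r r2 : relation A) (g : A -> A) :
  (forall a b, r a b -> r2 (g a) (g b)) ->
  forall a b, clos_trans A r a b -> clos_trans A r2 (g a) (g b).
Proof. intros H a b Hab; induction Hab; eauto using clos_trans. Qed.

Lemma crst_mono (r r2 : relation A) :
  (forall a b, r a b -> r2 a b) ->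
  forall a b, clos_refl_sym_trans A r a b -> clos_refl_sym_trans A r2 a b.
Proof. intros H a b Hab; induction Hab; eauto using clos_refl_sym_trans. Qed.

Lemma ct_step_rt (r : relation A) a b c :
  r a b -> clos_refl_trans A r b c -> clos_trans A r a c.
Proof.
  intros H1 H2. apply clos_rt_rt1n in H2. revert a H1.
  induction H2; intros a0 H1; [apply t_step; auto|].
  eapply t_trans; [apply t_step; exact H1| apply IHclos_refl_trans_1n; auto].
Qed.

Lemma ct_rt (r : relation A) a b : clos_trans A r a b -> clos_refl_trans A r a b.
Proof. induction 1; eauto using clos_refl_trans. Qed.

Lemma rt_nf (r : relation A) a b :
  clos_refl_trans A r a b -> (~ exists u, r a u) -> a = b.
Proof.
  intros H Hn. apply clos_rt_rt1n in H. destruct H; auto.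
  exfalso; apply Hn; eauto.
Qed.

Lemma chain_acc (r : relation A) :
  (~ exists f : nat -> A, forall n, r (f n) (f (S n))) ->
  forall x, Acc (fun y x => r x y) x.
Proof.
  intros H x. apply NNPP; intro Hx. apply H.
  assert (step : forall a : {a | ~ Acc (fun y x => r x y) a},
             {b : {b | ~ Acc (fun y x => r x y) b} | r (proj1_sig a) (proj1_sig b)}).
  { intros [a Ha]. apply constructive_indefinite_description.
    apply NNPP; intro Hn. apply Ha. constructor. intros y Hy.
    apply NNPP; intro Hy'. apply Hn. exists (exist _ y Hy'). exact Hy. }
  pose (g := fix g n := match n with 0 => exist _ x Hx | S n => proj1_sig (step (g n)) end).
  exists (fun n => proj1_sig (g n)). intro n. exact (proj2_sig (step (g n))).
Qed.

Lemma acc_nochain (r : relation A) x :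
  Acc (fun y x => r x y) x -> forall f n, f n = x -> ~ (forall n, r (f n) (f (S n))).
Proof.
  induction 1 as [x _ IH]. intros f n Hn Hc.
  apply (IH (f (S n)) ltac:(rewrite <- Hn; apply Hc) f (S n) eq_refl Hc).
Qed.

Lemma acc_ct (r : relation A) x :
  Acc (fun y x => r x y) x -> Acc (fun y x => clos_trans A r x y) x.
Proof.
  induction 1 as [x _ IH]. constructor. intros y Hy.
  apply clos_trans_t1n in Hy. destruct Hy as [y Hxy | y z Hxz Hzy].
  - apply IH; auto.
  - pose proof (IH y Hxz) as Ha. apply clos_t1n_trans in Hzy.
    destruct Ha as [Ha']. apply Ha'. exact Hzy.
Qed.

Lemma nf_exists (r : relation A) x :
  Acc (fun y x => r x y) x ->
  exists u, clos_refl_trans A r x u /\ ~ (exists v, r u v).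
Proof.
  induction 1 as [x _ IH].
  destruct (classic (exists u, r x u)) as [[u Hu]|Hn].
  - destruct (IH u Hu) as [v [H1 H2]]. exists v; split; auto. eapply rt_trans; [apply rt_step; exact Hu| exact H1].
  - exists x; split; [apply rt_refl| exact Hn].
Qed.
End Gen.

Section Terms.
Variables F V : Type.
Notation tm := (term F V).
Notation var := (@Var F V).

Fixpoint term_ind' (P : tm -> Prop) (HVar : forall x, P (var x))
  (HFun : forall f ts, Forall P ts -> P (Fun f ts)) (t : tm) {struct t} : P t :=
  match t with
  | Var _ x => HVar x
  | Fun f ts => HFun f ts ((fix go (l : list tm) : Forall P l :=
       match l with
       | [] => @Forall_nil tm P
       | u :: l' => @Forall_cons tm P u l' (@term_ind' P HVar HFun u) (go l')
       end) ts)
  end.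

Lemma subst_var (t : tm) : subst var t = t.
Proof.
  induction t as [x|f ts IH] using term_ind'; simpl; auto.
  f_equal. rewrite <- (map_id ts) at 2. apply map_ext_Forall. exact IH.
Qed.

Lemma subst_comp (s1 s2 : V -> tm) (t : tm) :
  subst s2 (subst s1 t) = subst (fun x => subst s2 (s1 x)) t.
Proof.
  induction t as [x|f ts IH] using term_ind'; simpl; auto.
  f_equal. rewrite map_map. apply map_ext_Forall. exact IH.
Qed.

Lemma subst_ext (s1 s2 : V -> tm) (t : tm) :
  (forall x, In x (vars t) -> s1 x = s2 x) -> subst s1 t = subst s2 t.
Proof.
  induction t as [x|f ts IH] using term_ind'; simpl; intros H.
  - apply H; auto.
  - f_equal. apply map_ext_in. intros u Hu. rewrite Forall_forall in IH.
    apply IH; auto. intros x Hx. apply H. apply in_concat. exists (vars u).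
    split; auto. apply in_map; auto.
Qed.

Lemma vars_subst (s : V -> tm) (t : tm) y :
  In y (vars (subst s t)) <-> exists x, In x (vars t) /\ In y (vars (s x)).
Proof.
  induction t as [x|f ts IH] using term_ind'; simpl.
  - split; [intros H; exists x; auto | intros [z [[->|[]] H]]; auto].
  - rewrite Forall_forall in IH. rewrite in_concat. split.
    + intros [l [Hl Hy]]. rewrite map_map in Hl. apply in_map_iff in Hl.
      destruct Hl as [u [<- Hu]]. apply IH in Hy; auto.
      destruct Hy as [x [Hx Hy]]. exists x; split; auto.
      apply in_concat. exists (vars u); split; auto. apply in_map; auto.
    + intros [x [Hx Hy]]. apply in_concat in Hx. destruct Hx as [l [Hl Hx]].
      apply in_map_iff in Hl. destruct Hl as [u [<- Hu]].
      exists (vars (subst s u)). split.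
      * rewrite map_map. apply in_map_iff. exists u; auto.
      * apply IH; eauto.
Qed.

Lemma vars_ctx f ts1 (u : tm) ts2 y :
  In y (vars (Fun f (ts1 ++ u :: ts2))) <->
  In y (concat (map (@vars F V) ts1)) \/ In y (vars u) \/ In y (concat (map (@vars F V) ts2)).
Proof.
  simpl. rewrite map_app, concat_app. simpl. rewrite !in_app_iff. tauto.
Qed.

Lemma rstep_subst (X : rules F V) (s : V -> tm) u v :
  rstep X u v -> rstep X (subst s u) (subst s v).
Proof.
  induction 1.
  - rewrite !subst_comp. constructor; auto.
  - simpl. rewrite !map_app. simpl. constructor; auto.
Qed.

Lemma rstep_mono (X Y : rules F V) u v :
  (forall rho, X rho -> Y rho) -> rstep X u v -> rstep Y u v.
Proof. intros H; induction 1; constructor; auto. Qed.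

Lemma beq_subst (B : rules F V) s u v : beq B u v -> beq B (subst s u) (subst s v).
Proof. apply crst_map. intros; apply rstep_subst; auto. Qed.

Lemma beq_ctx (B : rules F V) f ts1 ts2 u v :
  beq B u v -> beq B (Fun f (ts1 ++ u :: ts2)) (Fun f (ts1 ++ v :: ts2)).
Proof. apply (crst_map _ (fun u => Fun f (ts1 ++ u :: ts2))). intros; constructor; auto. Qed.

Lemma relmod_subst (R B : rules F V) s u v :
  relmod R B u v -> relmod R B (subst s u) (subst s v).
Proof.
  intros [u' [v' [H1 [H2 H3]]]]. exists (subst s u'), (subst s v').
  split; [apply beq_subst|split; [apply rstep_subst|apply beq_subst]]; auto.
Qed.

Lemma relmod_ctx (R B : rules F V) f ts1 ts2 u v :
  relmod R B u v -> relmod R B (Fun f (ts1 ++ u :: ts2)) (Fun f (ts1 ++ v :: ts2)).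
Proof.
  intros [u' [v' [H1 [H2 H3]]]]. exists (Fun f (ts1 ++ u' :: ts2)), (Fun f (ts1 ++ v' :: ts2)).
  split; [apply beq_ctx|split; [constructor|apply beq_ctx]]; auto.
Qed.

Lemma vars_rstep (X : rules F V) :
  (forall l r, X (l, r) -> incl (vars r) (vars l)) ->
  forall s t, rstep X s t -> incl (vars t) (vars s).
Proof.
  intros HX s t H. induction H; intros y Hy.
  - apply vars_subst in Hy. destruct Hy as [x [Hx Hy]].
    apply vars_subst. exists x; split; auto. eapply HX; eauto.
  - apply vars_ctx in Hy. apply vars_ctx. intuition.
Qed.

Lemma vars_rstep_rev (X : rules F V) :
  (forall l r, X (l, r) -> incl (vars l) (vars r)) ->
  forall s t, rstep X s t -> incl (vars s) (vars t).
Proof.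
  intros HX s t H. induction H; intros y Hy.
  - apply vars_subst in Hy. destruct Hy as [x [Hx Hy]].
    apply vars_subst. exists x; split; auto. eapply HX; eauto.
  - apply vars_ctx in Hy. apply vars_ctx. intuition.
Qed.

Inductive enc (l : tm) : tm -> Prop :=
| enc_root : forall s, enc l (subst s l)
| enc_sub : forall f ts1 ts2 u, enc l u -> enc l (Fun f (ts1 ++ u :: ts2)).

Lemma enc_refl l : enc l l.
Proof. rewrite <- (subst_var l) at 2. constructor. Qed.

Lemma enc_subst l t s : enc l t -> enc l (subst s t).
Proof.
  induction 1.
  - rewrite subst_comp. constructor.
  - simpl. rewrite map_app. simpl. constructor; auto.
Qed.

Lemma enc_trans l t u : enc l t -> enc t u -> enc l u.
Proof.
  intros H1 H2. induction H2.
  - apply enc_subst; auto.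
  - constructor; auto.
Qed.

Lemma red_enc (X : rules F V) t u :
  rstep X t u -> exists l r, X (l, r) /\ enc l t.
Proof.
  induction 1.
  - exists l, r; split; auto. constructor.
  - destruct IHrstep as [l [r [H1 H2]]]. exists l, r; split; auto. constructor; auto.
Qed.

Lemma enc_red (X : rules F V) l r t :
  X (l, r) -> enc l t -> exists u, rstep X t u.
Proof.
  intros HX H. induction H.
  - eexists; constructor; eauto.
  - destruct IHenc as [v Hv]. eexists; constructor; eauto.
Qed.

Fixpoint size (t : tm) : nat :=
  match t with Var _ _ => 1 | Fun _ ts => 2 + list_sum (map size ts) end.

Lemma size_pos t : 1 <= size t.
Proof. destruct t; simpl; lia. Qed.

Lemma size_ctx f ts1 (u : tm) ts2 : size u < size (Fun f (ts1 ++ u :: ts2)).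
Proof. simpl. rewrite map_app, list_sum_app. simpl. lia. Qed.

Lemma size_subst (s : V -> tm) (t : tm) :
  size t <= size (subst s t) /\
  (size t = size (subst s t) -> forall x, In x (vars t) -> exists y, s x = var y).
Proof.
  induction t as [x|f ts IH] using term_ind'; simpl.
  - split; [apply size_pos|]. intros H y [<-|[]].
    destruct (s x) as [z|g us] eqn:E; [eauto|]. simpl in H. lia.
  - assert (list_sum (map size ts) <= list_sum (map size (map (subst s) ts)) /\
            (list_sum (map size ts) = list_sum (map size (map (subst s) ts)) ->
             forall x, In x (concat (map (@vars F V) ts)) -> exists y, s x = var y)).
    { induction IH as [|u ts [H1 H2] _ [IH1 IH2]]; simpl; [split; [lia| intros _ _ []]|].
      split; [lia|]. intros E x Hx. apply in_app_iff in Hx. destruct Hx.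
      - apply H2; auto; lia.
      - apply IH2; auto; lia. }
    destruct H as [H1 H2]. split; [lia|]. intros E. apply H2. lia.
Qed.

Lemma enc_size l t : enc l t -> (exists s, t = subst s l) \/ size l < size t.
Proof.
  induction 1.
  - left; eauto.
  - right. pose proof (size_ctx f ts1 u ts2). destruct IHenc as [[s ->]|H1]; [|lia].
    pose proof (proj1 (size_subst s l)). lia.
Qed.

Lemma len_vars t : length (vars t) <= size t.
Proof.
  induction t as [x|f ts IH] using term_ind'; simpl; [lia|].
  assert (length (concat (map (@vars F V) ts)) <= list_sum (map size ts)); [|lia].
  induction IH; simpl; auto. rewrite length_app. lia.
Qed.

End Terms.


Section Perm.
Variable V : Type.

Definition vdec (x y : V) : {x = y} + {x <> y} :=
  match excluded_middle_informative (x = y) with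
  | left h => left h | right h => right h end.

Lemma nodup_len (l : list V) : length (nodup vdec l) <= length l.
Proof. induction l; simpl; auto. destruct (in_dec vdec a l); simpl; lia. Qed.

Lemma nodup_len_eq (l : list V) : length (nodup vdec l) = length l -> NoDup l.
Proof.
  induction l; simpl; intros H; [constructor|].
  destruct (in_dec vdec a l).
  - pose proof (nodup_len l). lia.
  - constructor; auto.
Qed.

Lemma NoDup_map_inj (g : V -> V) m a b :
  NoDup (map g m) -> In a m -> In b m -> g a = g b -> a = b.
Proof.
  induction m as [|c m IH]; simpl; [tauto|]. intros H Ha Hb E.
  inversion H as [|? ? Hn Hd]; subst.
  destruct Ha as [<-|Ha]; destruct Hb as [<-|Hb]; auto.
  - exfalso; apply Hn. rewrite E. apply in_map; auto.
  - exfalso; apply Hn. rewrite <- E. apply in_map; auto.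
Qed.

Definition swap (a b z : V) : V :=
  if vdec z a then b else if vdec z b then a else z.

Lemma swap_invol a b z : swap a b (swap a b z) = z.
Proof.
  unfold swap.
  destruct (vdec z a) as [e1|n1]; destruct (vdec z b) as [e2|n2];
  repeat match goal with |- context [vdec ?x ?y] => destruct (vdec x y) end;
  congruence.
Qed.

Lemma perm_ext (L : list V) (g : V -> V) :
  NoDup L -> (forall a b, In a L -> In b L -> g a = g b -> a = b) ->
  exists p, renaming p /\ forall a, In a L -> p a = g a.
Proof.
  induction L as [|a L IH]; intros Hnd Hinj.
  - exists (fun x => x). split; [exists (fun x => x); auto| intros _ []].
  - inversion Hnd as [|? ? Hn Hnd']; subst.
    destruct IH as [p' [[tau' [H1 H2]] H3]]; auto.
    { intros; apply Hinj; simpl; auto. }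
    exists (fun z => swap (p' a) (g a) (p' z)). split.
    + exists (fun z => tau' (swap (p' a) (g a) z)). split; intros x.
      * rewrite swap_invol; auto.
      * rewrite H2, swap_invol; auto.
    + intros b [<-|Hb].
      * unfold swap. destruct (vdec (p' a) (p' a)); congruence.
      * rewrite (H3 b Hb). unfold swap.
        destruct (vdec (g b) (p' a)) as [e|ne].
        { exfalso. rewrite <- H3 in e; auto. apply (f_equal tau') in e.
          rewrite !H1 in e. subst; auto. }
        destruct (vdec (g b) (g a)) as [e|ne2]; auto.
        exfalso. apply Hinj in e; simpl; auto. subst; auto.
Qed.
End Perm.

Unset Implicit Arguments.

Section Main.
Variables F V : Type.
Notation tm := (term F V).
Notation var := (@Var F V).
Variables (B R D : rules F V) (nf : rule F V -> tm).
Hypothesis HB : forall l r, B (l, r) -> incl (vars l) (vars r) /\ incl (vars r) (vars l).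
Hypothesis HR : is_TRS R.
Hypothesis HSN : terminating_mod R B.
Hypothesis HCR : church_rosser_mod R B.
Hypothesis Hnf : forall l r, R (l, r) ->
  clos_refl_trans tm (relmod R B) r (nf (l, r)) /\ nf_of (relmod R B) (nf (l, r)).
Hypothesis HDT : forall rho, D rho -> exists l r, R (l, r) /\ rho = (l, nf (l, r)).
Hypothesis HTD : forall rho, (exists l r, R (l, r) /\ rho = (l, nf (l, r))) ->
  exists rho', D rho' /\ right_B_variants B rho rho'.
Hypothesis Huniq : forall rho rho', D rho -> D rho' -> right_B_variants B rho rho' -> rho = rho'.

Notation RM := (relmod R B).
Notation DD := (Rddot D).

Lemma relmod_step (X : rules F V) s t : rstep X s t -> relmod X B s t.
Proof. intros H; exists s, t; repeat split; auto; apply rst_refl. Qed.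

Lemma D_ct s t : rstep D s t -> clos_trans tm RM s t.
Proof.
  induction 1 as [l r s HD | f ts1 ts2 u v H IH].
  - destruct (HDT _ HD) as [l0 [r0 [HR0 E]]]. injection E as -> ->.
    apply ct_step_rt with (subst s r0).
    + apply relmod_step. constructor; auto.
    + apply (crt_map (r:=RM) _ (subst s)); [intros; apply relmod_subst; auto|]. apply Hnf; auto.
  - apply (ct_map (r:=RM) _ (fun u => Fun f (ts1 ++ u :: ts2))); [intros; apply relmod_ctx; auto| auto].
Qed.

Lemma DD_ct s t : rstep DD s t -> clos_trans tm RM s t.
Proof. intros H. apply D_ct. eapply rstep_mono; [|exact H]. intros rho [H1 _]; auto. Qed.

Lemma ct_beq a b x y : clos_trans tm RM a b -> beq B x a -> beq B b y -> clos_trans tm RM x y.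
Proof.
  intros H; revert x y; induction H as [a b H|a b c _ IH1 _ IH2]; intros x y Hx Hy.
  - apply t_step. destruct H as [a' [b' [H1 [H2 H3]]]]. exists a', b'.
    split; [eapply rst_trans; eauto| split; auto; eapply rst_trans; eauto].
  - eapply t_trans; [apply IH1; [exact Hx| apply rst_refl]| apply IH2; [apply rst_refl| exact Hy]].
Qed.

Lemma relmodDD_ct s t : relmod DD B s t -> clos_trans tm RM s t.
Proof.
  intros [s' [t' [H1 [H2 H3]]]]. eapply ct_beq; [apply DD_ct; exact H2| eauto | eauto].
Qed.

Lemma acc_RM x : Acc (fun y x => RM x y) x.
Proof. exact (chain_acc _ HSN x). Qed.

Lemma acc_RDD x : Acc (fun y x => relmod DD B x y) x.
Proof.
  eapply Acc_incl; [| apply acc_ct, acc_RM]. intros a b H. apply relmodDD_ct; auto.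
Qed.

Lemma acc_DD x : Acc (fun y x => rstep DD x y) x.
Proof. eapply Acc_incl; [| apply acc_RDD]. intros a b H. apply relmod_step; auto. Qed.

Lemma acc_R x : Acc (fun y x => rstep R x y) x.
Proof. eapply Acc_incl; [| apply acc_RM]. intros a b H. apply relmod_step; auto. Qed.

Lemma nfex_DD s : exists u, clos_refl_trans tm (rstep DD) s u /\ nf_of (rstep DD) u.
Proof. exact (nf_exists _ (acc_DD s)). Qed.

Lemma nfex_R s : exists u, clos_refl_trans tm (rstep R) s u /\ nf_of (rstep R) u.
Proof. exact (nf_exists _ (acc_R s)). Qed.

Lemma beq_conv (X : rules F V) a b : beq B a b -> conv_RB X B a b.
Proof. apply crst_mono. intros; right; auto. Qed.

Lemma RM_conv a b : RM a b -> conv_RB R B a b.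
Proof.
  intros [a' [b' [H1 [H2 H3]]]].
  eapply rst_trans; [apply beq_conv; eauto|].
  eapply rst_trans; [apply rst_step; left; eauto| apply beq_conv; eauto].
Qed.

Lemma ct_conv a b : clos_trans tm RM a b -> conv_RB R B a b.
Proof. induction 1; [apply RM_conv; auto| eapply rst_trans; eauto]. Qed.

Lemma rtDD_conv a b : clos_refl_trans tm (rstep DD) a b -> conv_RB R B a b.
Proof.
  induction 1; [apply ct_conv, DD_ct; auto| apply rst_refl| eapply rst_trans; eauto].
Qed.

Lemma convDD_R a b : conv_RB DD B a b -> conv_RB R B a b.
Proof.
  induction 1 as [a b [H|H]| | |].
  - apply ct_conv, DD_ct; auto.
  - apply rst_step; right; auto.
  - apply rst_refl.
  - apply rst_sym; auto.
  - eapply rst_trans; eauto.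
Qed.

Lemma conv_subst s a b : conv_RB R B a b -> conv_RB R B (subst s a) (subst s b).
Proof.
  apply crst_map. intros x y [H|H]; [left|right]; apply rstep_subst; auto.
Qed.

Lemma CR_nf a b : conv_RB R B a b -> nf_of (rstep R) a -> nf_of (rstep R) b -> beq B a b.
Proof.
  intros H Ha Hb. destruct (HCR _ _ H) as [u [v [H1 [H2 H3]]]].
  apply rt_nf in H1; auto. apply rt_nf in H3; auto. subst; auto.
Qed.

Lemma nfRM_nfR t : nf_of RM t -> nf_of (rstep R) t.
Proof. intros H [u Hu]; apply H; exists u; apply relmod_step; auto. Qed.

Lemma rtRM_conv a b : clos_refl_trans tm RM a b -> conv_RB R B a b.
Proof.
  induction 1; [apply RM_conv; auto| apply rst_refl| eapply rst_trans; eauto].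
Qed.

Lemma conv_D l r : D (l, r) -> conv_RB R B l r.
Proof.
  intros HD. destruct (HDT _ HD) as [l0 [r0 [HR0 E]]]. injection E as -> ->.
  assert (Hs : rstep R l0 r0).
  { rewrite <- (subst_var l0), <- (subst_var r0). constructor; auto. }
  eapply rst_trans; [apply rst_step; left; exact Hs|].
  destruct (Hnf _ _ HR0) as [H _]. apply rtRM_conv; auto.
Qed.

Lemma nf_D l r : D (l, r) -> nf_of RM r.
Proof.
  intros HD. destruct (HDT _ HD) as [l0 [r0 [HR0 E]]]. injection E as -> ->.
  apply Hnf; auto.
Qed.

Lemma nf_ren t p : renaming p -> nf_of RM t -> nf_of RM (subst (fun x => var (p x)) t).
Proof.
  intros [tau [H1 H2]] Hn [w Hw]. apply Hn. exists (subst (fun x => var (tau x)) w).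
  apply (relmod_subst (fun x => var (tau x))) in Hw.
  rewrite subst_comp in Hw. simpl in Hw.
  rewrite (subst_ext _ var) in Hw; [|intros; rewrite H1; auto].
  rewrite subst_var in Hw. exact Hw.
Qed.

Lemma no_variant l r l1 r1 p :
  D (l, r) -> D (l1, r1) -> (l1, r1) <> (l, r) -> renaming p ->
  subst (fun x => var (p x)) l1 = l -> False.
Proof.
  intros HD HD1 Hne Hp E. apply Hne. apply Huniq; auto.
  exists p. split; auto. split; simpl; auto.
  apply CR_nf.
  - eapply rst_trans; [apply rst_sym, conv_subst, conv_D; exact HD1|].
    rewrite E. apply conv_D; auto.
  - apply nfRM_nfR, nf_ren; auto. eapply nf_D; eauto.
  - apply nfRM_nfR. eapply nf_D; eauto.
Qed.


Definition nv (t : tm) := length (nodup (@vdec V) (vars t)).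
Definition mu (t : tm) := size t * size t + size t - nv t.

Lemma nv_le t : nv t <= size t.
Proof. unfold nv. pose proof (nodup_len (vars t)). pose proof (len_vars t). lia. Qed.

Lemma R_to_D l r : R (l, r) -> exists l' r', D (l', r') /\ enc l' l.
Proof.
  intros HR0. destruct (HTD (l, nf (l, r))) as [[l' r'] [HD [p [[tau [H1 H2]] [E _]]]]].
  { exists l, r; auto. }
  simpl in E. exists l', r'. split; auto.
  assert (Hl : subst (fun x => var (tau x)) l' = l).
  { rewrite <- E, subst_comp; simpl. rewrite (subst_ext _ var); [apply subst_var| intros; rewrite H1; auto]. }
  rewrite <- Hl. apply enc_root.
Qed.

Lemma D_to_DD : forall n l r, mu l = n -> D (l, r) -> exists l' r', DD (l', r') /\ enc l' l.
Proof.
  intro n; induction n as [n IH] using Wf_nat.lt_wf_ind. intros l r Hn HD.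
  destruct (classic (DD (l, r))) as [HDD|HnDD]; [exists l, r; split; auto; apply enc_refl|].
  assert (Hred : exists u, rstep (remove_rule D (l, r)) l u).
  { apply NNPP; intro Hc. apply HnDD. split; auto. }
  destruct Hred as [u Hu]. destruct (red_enc Hu) as [l1 [r1 [[HD1 Hne] Henc]]].
  assert (Hlt : mu l1 < mu l).
  { pose proof (nv_le l) as N1; pose proof (nv_le l1) as N2;
    pose proof (size_pos l); pose proof (size_pos l1).
    unfold mu.
    destruct (enc_size Henc) as [[s Es]|Hs]; [|nia].
    destruct (size_subst s l1) as [Hle Heq]. rewrite <- Es in Hle, Heq.
    destruct (Nat.lt_ge_cases (size l1) (size l)) as [Hs|Hs]; [nia|].
    assert (Hsz : size l1 = size l) by lia. specialize (Heq Hsz).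
    set (g := fun x => match s x with Var _ y => y | _ => x end).
    assert (Hg : forall x, In x (vars l1) -> s x = var (g x)).
    { intros x Hx. destruct (Heq x Hx) as [y Hy]. unfold g; rewrite Hy; auto. }
    set (m := nodup (@vdec V) (vars l1)).
    destruct (classic (NoDup (map g m))) as [Hnd|Hnd].
    - exfalso. destruct (@perm_ext V m g (NoDup_nodup (@vdec V) _)) as [p [Hp Hpg]].
      { intros a b Ha Hb E. eapply NoDup_map_inj; eauto. }
      apply (no_variant l r l1 r1 p HD HD1 Hne Hp). rewrite Es. apply subst_ext. intros x Hx.
      rewrite Hg; auto. f_equal. apply Hpg. apply nodup_In; auto.
    - assert (nv l < nv l1); [|nia].
      assert (Hlen : length (nodup (@vdec V) (map g m)) < length m).
      { pose proof (nodup_len (map g m)) as L1. rewrite length_map in L1.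
        assert (length (nodup (@vdec V) (map g m)) <> length (map g m)) as L2
          by (intro E; apply Hnd, nodup_len_eq; auto).
        rewrite length_map in L2. lia. }
      unfold nv. fold m. eapply Nat.le_lt_trans; [|exact Hlen].
      apply NoDup_incl_length; [apply NoDup_nodup|]. intros y Hy.
      apply nodup_In in Hy. apply nodup_In. rewrite Es in Hy. apply vars_subst in Hy.
      destruct Hy as [x [Hx Hy]]. rewrite Hg in Hy; auto. simpl in Hy. destruct Hy as [<-|[]].
      apply in_map. apply nodup_In; auto. }
  destruct (IH (mu l1) ltac:(lia) l1 r1 eq_refl HD1) as [l' [r' [H1 H2]]].
  exists l', r'; split; auto. eapply enc_trans; eauto.
Qed.

Lemma red_R_DD t u : rstep R t u -> exists w, rstep DD t w.
Proof.
  intros H. destruct (red_enc H) as [l [r [HR0 He]]].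
  destruct (R_to_D l r HR0) as [l' [r' [HD' He']]].
  destruct (D_to_DD _ l' r' eq_refl HD') as [l'' [r'' [HDD He'']]].
  eapply (enc_red DD r'' HDD). eapply enc_trans; [exact He''|]. eapply enc_trans; eauto.
Qed.

Lemma nfDD_nfR t : nf_of (rstep DD) t -> nf_of (rstep R) t.
Proof. intros H [u Hu]. apply H. eapply red_R_DD; eauto. Qed.

Lemma beq_vars a b : beq B a b -> incl (vars a) (vars b) /\ incl (vars b) (vars a).
Proof.
  induction 1 as [a b H| | |].
  - split; [eapply vars_rstep_rev| eapply vars_rstep]; eauto; intros l r Hl; apply (HB _ _ Hl).
  - split; apply incl_refl.
  - tauto.
  - split; eapply incl_tran; try apply IHclos_refl_sym_trans1; try apply IHclos_refl_sym_trans2.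
Qed.

Lemma vars_rt a b : clos_refl_trans tm RM a b -> incl (vars b) (vars a).
Proof.
  induction 1 as [a b [a' [b' [H1 [H2 H3]]]]| |]; [|apply incl_refl|eapply incl_tran; eauto].
  eapply incl_tran; [apply (beq_vars _ _ H3)|]. eapply incl_tran; [|apply (beq_vars _ _ H1)].
  eapply vars_rstep; [|exact H2]. intros l r Hl; apply (HR _ _ Hl).
Qed.

Lemma rtR_conv a b : clos_refl_trans tm (rstep R) a b -> conv_RB R B a b.
Proof. induction 1; [apply rst_step; left; auto| apply rst_refl| eapply rst_trans; eauto]. Qed.

Lemma rtDD_convDD a b : clos_refl_trans tm (rstep DD) a b -> conv_RB DD B a b.
Proof. induction 1; [apply rst_step; left; auto| apply rst_refl| eapply rst_trans; eauto]. Qed.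

Lemma main_result :
  is_TRS DD /\ normalization_equivalent_mod DD R B /\
  conversion_equivalent_mod DD R B /\ canonical_mod DD B.
Proof.
  split; [|split; [|split]].
  - intros l r [HD _]. destruct (HDT _ HD) as [l0 [r0 [HR0 E]]]. injection E as -> ->.
    destruct (HR _ _ HR0) as [H1 H2]. split; auto.
    destruct (Hnf _ _ HR0) as [Hrt _]. intros y Hy. apply H2. eapply vars_rt; eauto.
  - intros s t; split.
    + intros [u [[Hsu Hnu] Hut]]. destruct (nfex_R s) as [w [Hsw Hnw]].
      exists w; split; [split; auto|].
      eapply rst_trans; [|exact Hut]. apply CR_nf; auto.
      * eapply rst_trans; [apply rst_sym, rtR_conv, Hsw| apply rtDD_conv, Hsu].
      * apply nfDD_nfR; auto.
    + intros [u [[Hsu Hnu] Hut]]. destruct (nfex_DD s) as [w [Hsw Hnw]].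
      exists w; split; [split; auto|].
      eapply rst_trans; [|exact Hut]. apply CR_nf; auto.
      * eapply rst_trans; [apply rst_sym, rtDD_conv, Hsw| apply rtR_conv, Hsu].
      * apply nfDD_nfR; auto.
  - intros s t; split; [apply convDD_R|]. intros H.
    destruct (nfex_DD s) as [s' [H1 H2]]. destruct (nfex_DD t) as [t' [H3 H4]].
    assert (Hb : beq B s' t').
    { apply CR_nf; try (apply nfDD_nfR; auto).
      eapply rst_trans; [apply rst_sym, rtDD_conv, H1|].
      eapply rst_trans; [exact H| apply rtDD_conv, H3]. }
    eapply rst_trans; [apply rtDD_convDD, H1|].
    eapply rst_trans; [apply beq_conv, Hb| apply rst_sym, rtDD_convDD, H3].
  - split; [split|split].
    + intros [f Hf]. exact (acc_nochain _ (acc_RDD (f 0)) f 0 eq_refl Hf).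
    + intros s t H.
      destruct (nfex_DD s) as [s' [H1 H2]]. destruct (nfex_DD t) as [t' [H3 H4]].
      exists s', t'. split; auto. split; auto.
      apply CR_nf; try (apply nfDD_nfR; auto).
      eapply rst_trans; [apply rst_sym, rtDD_conv, H1|].
      eapply rst_trans; [apply convDD_R, H| apply rtDD_conv, H3].
    + intros l r [HD Hn] [u Hu]. apply Hn. exists u. eapply rstep_mono; [|exact Hu].
      intros rho [[HD' _] Hne]; split; auto.
    + intros l r [HD _] [w Hw]. apply relmodDD_ct in Hw. apply clos_trans_t1n in Hw.
      destruct Hw as [w Hw|y w Hw _]; eapply (nf_D l r HD); eauto.
Qed.

End Main.


Theorem theorem6p12 (F V : Type)
  (HV : forall xs : list V, exists x, ~ In x xs)
  (B : rules F V)
  (HB : forall l r, B (l, r) -> incl (vars l) (vars r) /\ incl (vars r) (vars l))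
  (R : rules F V)
  (HR : is_TRS R)
  (Hcomp : complete_mod R B)
  (Rdot : rules F V)
  (Hdot : is_Rdot R B Rdot) :
  is_TRS (Rddot Rdot) /\
  normalization_equivalent_mod (Rddot Rdot) R B /\
  conversion_equivalent_mod (Rddot Rdot) R B /\
  canonical_mod (Rddot Rdot) B.
Proof.
  destruct Hcomp as [HSN HCR].
  destruct Hdot as [nf [Hnf [HDT [HTD Huniq]]]].
  exact (main_result F V B R Rdot nf HB HR HSN HCR Hnf HDT HTD Huniq).
Qed.
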